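(* With $h$ as defined in the context, the function $x\mapsto h(x)/(x+1)$ is strictly decreasing on $(-1,\infty)$ and the function $x\mapsto h(x)(x+1)$ is strictly increasing on $(-1,\infty)$.
   Context: Let $u_n=(-1)^{s_2(n)}$, where $s_2(n)$ is the sum of the binary digits of the non-negative integer $n$ (Thue–Morse sequence with values $\pm1$). For real $x>-2$ define $h(x)=\prod_{n=1}^\infty\left(\frac{2n+x}{2n+1+x}\right)^{u_n}$ (limit of partial products; it converges). *)

(* Defs.v *)
From Stdlib Require Import Reals Arith ZArith.
From Coquelicot Require Import Coquelicot.
Open Scope R_scope.

(* sum of binary digits, computed with fuel (fuel n >= n suffices) *)
Fixpoint s2_aux (fuel n : nat) : nat :=
  match fuel with
  | O => O
  | S f => match n with
           | O => O
           | _ => Nat.modulo n 2 + s2_aux f (Nat.div n 2)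
           end
  end.

Definition s2 (n : nat) : nat := s2_aux n n.

(* Thue--Morse sequence with values +-1, as an integer exponent *)
Definition u (n : nat) : Z := if Nat.even (s2 n) then 1%Z else (-1)%Z.

Definition factor (x : R) (n : nat) : R :=
  powerRZ ((2 * INR n + x) / (2 * INR n + 1 + x)) (u n).

Fixpoint partial_prod (x : R) (N : nat) : R :=
  match N with
  | O => 1
  | S M => partial_prod x M * factor x (S M)
  end.

Definition h (x : R) : R := real (Lim_seq (partial_prod x)).

(* Main.v *)
Require Import Defs.
From Stdlib Require Import Reals Lia Lra.
From Coquelicot Require Import Coquelicot.
Open Scope R_scope.

Lemma s2_aux_0 f : s2_aux f 0 = 0%nat.
Proof. destruct f; reflexivity. Qed.

Lemma s2_aux_S f n : s2_aux (S f) n = (n mod 2 + s2_aux f (n / 2))%nat.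
Proof. destruct n. - simpl. rewrite s2_aux_0. reflexivity. - reflexivity. Qed.

Lemma half_le n : (S n / 2 <= n)%nat.
Proof. pose proof (Nat.div_mod (S n) 2). pose proof (Nat.mod_upper_bound (S n) 2). lia. Qed.

Lemma s2_aux_stable : forall f g n, (n <= f)%nat -> (n <= g)%nat -> s2_aux f n = s2_aux g n.
Proof.
  induction f; intros g n Hf Hg.
  - assert (n = 0%nat) by lia. subst. rewrite !s2_aux_0. reflexivity.
  - destruct g. + assert (n = 0%nat) by lia. subst. rewrite !s2_aux_0. reflexivity.
    + rewrite !s2_aux_S. f_equal. destruct n.
      * simpl. rewrite !s2_aux_0. reflexivity.
      * pose proof (half_le n). apply IHf; lia.
Qed.

Lemma s2_step n : (1 <= n)%nat -> s2 n = (n mod 2 + s2 (n / 2))%nat.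
Proof.
  intros Hn. unfold s2. destruct n; [lia|]. rewrite s2_aux_S. f_equal.
  apply s2_aux_stable; [|lia]. destruct n. simpl; lia. pose proof (half_le (S n)). lia.
Qed.

Lemma div_facts k : ((2*k+1) mod 2 = 1 /\ (2*k+1)/2 = k /\ (2*k) mod 2 = 0 /\ (2*k)/2 = k)%nat.
Proof. repeat split;
 [symmetry; apply (Nat.mod_unique _ _ k)|symmetry; apply (Nat.div_unique _ _ _ 1)|symmetry; apply (Nat.mod_unique _ _ k)|symmetry; apply (Nat.div_unique _ _ _ 0)]; lia. Qed.

Lemma u_even k : (1 <= k)%nat -> u (2*k) = u k.
Proof.
  intros Hk. unfold u. rewrite (s2_step (2*k)) by lia.
  destruct (div_facts k) as [_ [_ [H1 H2]]]. rewrite H1, H2. reflexivity.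
Qed.

Lemma u_odd k : u (2*k+1) = Z.opp (u k).
Proof.
  unfold u. rewrite (s2_step (2*k+1)) by lia.
  destruct (div_facts k) as [H1 [H2 _]]. rewrite H1, H2.
  change (1 + s2 k)%nat with (S (s2 k)). rewrite Nat.even_succ, <- Nat.negb_even.
  destruct (Nat.even (s2 k)); reflexivity.
Qed.

Definition t (x : R) (n : nat) := (2 * INR n + x) / (2 * INR n + 1 + x).

Lemma factor_cases x n : (factor x n = t x n /\ u n = 1%Z) \/ (factor x n = / t x n /\ u n = (-1)%Z).
Proof.
  unfold factor. fold (t x n). unfold u. destruct (Nat.even (s2 n)); simpl; [left|right];
  rewrite ?Rmult_1_r; split; reflexivity.
Qed.

Lemma div_le A B C D : 0 < B -> 0 < D -> A * D <= C * B -> A / B <= C / D.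
Proof.
  intros HB HD H. replace (A / B) with ((A * D) * / (B * D)) by (field; lra).
  replace (C / D) with ((C * B) * / (B * D)) by (field; lra).
  apply Rmult_le_compat_r; [left; apply Rinv_0_lt_compat; nra | exact H].
Qed.

Lemma sq_key p q : 0 < p -> p < q -> (p * (q + 1)) * (p * (q + 1)) <= (q * (p + 1)) * (q * (p + 1)).
Proof. intros. assert (p * (q+1) <= q * (p+1)) by nra. assert (0 <= p*(q+1)) by nra. nra. Qed.

Lemma ratio_alg p q f g : 0 < p -> p < q ->
  ((f = p / (p + 1) /\ g = q / (q + 1)) \/ (f = / (p / (p + 1)) /\ g = / (q / (q + 1)))) ->
  g * ((q + 1) / (p + 1)) <= (q / p) * f /\ f * ((q + 1) / (p + 1)) <= (q / p) * g.
Proof.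
  intros Hp Hpq [[-> ->]|[-> ->]]; pose proof (sq_key p q Hp Hpq); split.
  - right. field. lra.
  - replace (p / (p + 1) * ((q + 1) / (p + 1))) with ((p * (q+1)) / ((p+1)*(p+1))) by (field; lra).
    replace (q / p * (q / (q + 1))) with ((q * q) / (p * (q+1))) by (field; lra).
    apply div_le; nra.
  - replace (/ (q / (q + 1)) * ((q + 1) / (p + 1))) with (((q+1)*(q+1)) / (q * (p+1))) by (field; lra).
    replace (q / p * / (p / (p + 1))) with ((q * (p+1)) / (p * p)) by (field; lra).
    apply div_le; nra.
  - right. field. lra.
Qed.

Definition b (x y m : R) := (m + y) / (m + x).

Lemma INR_ge1 n : (1 <= n)%nat -> 1 <= INR n.
Proof. intros H. apply (le_INR 1 n) in H. simpl in H. exact H. Qed.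

Lemma factor_pos x n : -1 < x -> (1 <= n)%nat -> 0 < factor x n.
Proof.
  intros Hx Hn. pose proof (INR_ge1 n Hn).
  assert (0 < t x n) by (unfold t; apply Rdiv_lt_0_compat; lra).
  destruct (factor_cases x n) as [[-> _]|[-> _]]; [lra| apply Rinv_0_lt_compat; lra].
Qed.

Lemma factor_ratio x y n : -1 < x -> x < y -> (1 <= n)%nat ->
  factor y n * b x y (2 * INR n + 1) <= b x y (2 * INR n) * factor x n /\
  factor x n * b x y (2 * INR n + 1) <= b x y (2 * INR n) * factor y n.
Proof.
  intros Hx Hxy Hn. pose proof (INR_ge1 n Hn). set (r := INR n) in *.
  replace (b x y (2 * r + 1)) with (((2*r+y) + 1) / ((2*r+x) + 1)) by (unfold b; f_equal; ring).
  unfold b.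
  apply ratio_alg; [lra|lra|].
  destruct (factor_cases x n) as [[Hfx Hux]|[Hfx Hux]];
  destruct (factor_cases y n) as [[Hfy Huy]|[Hfy Huy]]; try congruence;
  rewrite Hfx, Hfy; unfold t; fold r;
  replace (2 * r + 1 + x) with (2*r+x+1) by ring; replace (2 * r + 1 + y) with (2*r+y+1) by ring; auto.
Qed.

Lemma b_mono x y m m' : x < y -> 0 < m + x -> m <= m' -> b x y m' <= b x y m.
Proof. intros. unfold b. apply div_le; nra. Qed.

Lemma b_ge1 x y m : x < y -> 0 < m + x -> 1 <= b x y m.
Proof. intros. unfold b. replace 1 with (1/1) by field. apply div_le; nra. Qed.

Lemma pp_pos x N : -1 < x -> 0 < partial_prod x N.
Proof.
  intros Hx. induction N; simpl. lra. apply Rmult_lt_0_compat; auto. apply factor_pos; lia || lra.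
Qed.

Lemma pp_ratio x y N : -1 < x -> x < y -> (1 <= N)%nat ->
  partial_prod y N * b x y (2 * INR N + 1) <= b x y 2 * partial_prod x N /\
  partial_prod x N * b x y (2 * INR N + 1) <= b x y 2 * partial_prod y N.
Proof.
  intros Hx Hxy HN. induction N as [|N IH]; [lia|].
  destruct (factor_ratio x y (S N) Hx Hxy ltac:(lia)) as [F1 F2].
  pose proof (factor_pos x (S N) Hx ltac:(lia)).
  pose proof (factor_pos y (S N) (Rlt_trans _ _ _ Hx Hxy) ltac:(lia)).
  pose proof (pp_pos x N Hx). pose proof (pp_pos y N (Rlt_trans _ _ _ Hx Hxy)).
  destruct N as [|N].
  - change (partial_prod y 1) with (1 * factor y 1). change (partial_prod x 1) with (1 * factor x 1).
    replace (2 * INR 1) with 2 in * by (simpl; ring).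
    rewrite !Rmult_1_l. split; lra.
  - destruct (IH ltac:(lia)) as [I1 I2].
    assert (Hm : b x y (2 * INR (S (S N))) <= b x y (2 * INR (S N) + 1)).
    { apply b_mono; auto. pose proof (pos_INR (S N)); lra. rewrite (S_INR (S N)). lra. }
    pose proof (b_ge1 x y (2 * INR (S (S N))) Hxy ltac:(pose proof (INR_ge1 (S (S N)) ltac:(lia)); lra)).
    change (partial_prod y (S (S N))) with (partial_prod y (S N) * factor y (S (S N))).
    change (partial_prod x (S (S N))) with (partial_prod x (S N) * factor x (S (S N))).
    split.
    + apply Rle_trans with (partial_prod y (S N) * (b x y (2 * INR (S (S N))) * factor x (S (S N)))).
      { rewrite Rmult_assoc. apply Rmult_le_compat_l; lra. }
      apply Rle_trans with ((partial_prod y (S N) * b x y (2 * INR (S N) + 1)) * factor x (S (S N))).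
      { rewrite Rmult_assoc. apply Rmult_le_compat_l. lra. apply Rmult_le_compat_r; lra. }
      rewrite <- Rmult_assoc. apply Rmult_le_compat_r; lra.
    + apply Rle_trans with (partial_prod x (S N) * (b x y (2 * INR (S (S N))) * factor y (S (S N)))).
      { rewrite Rmult_assoc. apply Rmult_le_compat_l; lra. }
      apply Rle_trans with ((partial_prod x (S N) * b x y (2 * INR (S N) + 1)) * factor y (S (S N))).
      { rewrite Rmult_assoc. apply Rmult_le_compat_l. lra. apply Rmult_le_compat_r; lra. }
      rewrite <- Rmult_assoc. apply Rmult_le_compat_r; lra.
Qed.

Lemma pp_bound x y N : -1 < x -> x < y ->
  partial_prod y N <= b x y 2 * partial_prod x N /\ partial_prod x N <= b x y 2 * partial_prod y N.
Proof.
  intros Hx Hxy. pose proof (b_ge1 x y 2 Hxy ltac:(lra)).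
  pose proof (pp_pos x N Hx). pose proof (pp_pos y N (Rlt_trans _ _ _ Hx Hxy)).
  destruct N as [|N].
  - simpl. split; lra.
  - destruct (pp_ratio x y (S N) Hx Hxy ltac:(lia)) as [A1 A2].
    pose proof (b_ge1 x y (2 * INR (S N) + 1) Hxy ltac:(pose proof (pos_INR (S N)); lra)).
    split; nra.
Qed.

Definition c (x : R) (k : nat) :=
  (4 * INR k + x) * (4 * INR k + 3 + x) / ((4 * INR k + 1 + x) * (4 * INR k + 2 + x)).

Lemma INR_2k k : INR (2 * k) = 2 * INR k.
Proof. rewrite mult_INR. simpl. ring. Qed.
Lemma INR_2k1 k : INR (2 * k + 1) = 2 * INR k + 1.
Proof. rewrite plus_INR, mult_INR. simpl. ring. Qed.

Lemma pair_prod x k : -1 < x -> (1 <= k)%nat ->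
  (u k = 1%Z /\ factor x (2 * k) * factor x (2 * k + 1) = c x k) \/
  (u k = (-1)%Z /\ factor x (2 * k) * factor x (2 * k + 1) = / c x k).
Proof.
  intros Hx Hk. pose proof (INR_ge1 k Hk). pose proof (u_even k Hk) as E1. pose proof (u_odd k) as E2.
  destruct (factor_cases x (2*k)) as [[F1 U1]|[F1 U1]];
  destruct (factor_cases x (2*k+1)) as [[F2 U2]|[F2 U2]];
  rewrite E1 in U1; rewrite E2, U1 in U2; simpl in U2; try discriminate;
  rewrite F1, F2; unfold t, c; rewrite INR_2k, INR_2k1.
  - left. split. exact U1. field. repeat split; lra.
  - right. split. exact U1. field. repeat split; lra.
Qed.

Fixpoint A (x : R) (K : nat) : R :=
  match K with O => 1 | S J => A x J * c x (S J) end.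
Fixpoint B (x : R) (K : nat) : R :=
  match K with O => 1 | S J => B x J * (if Z.eqb (u (S J)) 1 then c x (S J) else 1) end.

Lemma c_bounds x k : -1 < x -> (1 <= k)%nat ->
  0 < c x k /\ c x k < 1 /\ 1 - / (8 * INR k * INR k) <= c x k.
Proof.
  intros Hx Hk. pose proof (INR_ge1 k Hk). unfold c. set (r := INR k) in *.
  set (a := 4 * r + x).
  replace (4 * r + 3 + x) with (a + 3) by (unfold a; ring).
  replace (4 * r + 1 + x) with (a + 1) by (unfold a; ring).
  replace (4 * r + 2 + x) with (a + 2) by (unfold a; ring).
  assert (Ha : 3 < a) by (unfold a; lra).
  replace (a * (a + 3) / ((a + 1) * (a + 2))) with (1 - 2 / ((a+1)*(a+2))) by (field; lra).
  assert (0 < 2 / ((a+1)*(a+2))) by (apply Rdiv_lt_0_compat; nra).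
  assert (2 / ((a+1)*(a+2)) < 1).
  { unfold Rdiv. apply (Rmult_lt_reg_r ((a+1)*(a+2))); [nra|].
    rewrite Rmult_assoc, Rinv_l by nra. nra. }
  repeat split; try lra.
  assert (HH : 2 / ((a+1)*(a+2)) <= 1 / (8 * r * r)).
  { assert (4 * r < a + 1) by (unfold a; lra).
    apply div_le; [nra|nra|]. 
    assert (16 * r * r <= (a+1)*(a+2)) by nra. lra. }
  unfold Rdiv in HH. rewrite Rmult_1_l in HH. unfold Rdiv. lra.
Qed.

Lemma A_pos x K : -1 < x -> 0 < A x K.
Proof. intros Hx. induction K; simpl. lra. destruct (c_bounds x (S K) Hx ltac:(lia)) as [? _]. nra. Qed.

Lemma A_decr x K : -1 < x -> A x (S K) <= A x K.
Proof. intros Hx. simpl. pose proof (A_pos x K Hx). destruct (c_bounds x (S K) Hx ltac:(lia)) as [? [? _]]. nra. Qed.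

Lemma B_ge_A x K : -1 < x -> A x K <= B x K.
Proof.
  intros Hx. induction K; simpl. lra. pose proof (A_pos x K Hx).
  destruct (c_bounds x (S K) Hx ltac:(lia)) as [? [? _]].
  destruct (Z.eqb (u (S K)) 1); nra.
Qed.

Lemma B_decr x K : -1 < x -> B x (S K) <= B x K.
Proof.
  intros Hx. simpl. pose proof (A_pos x K Hx). pose proof (B_ge_A x K Hx).
  destruct (c_bounds x (S K) Hx ltac:(lia)) as [? [? _]].
  destruct (Z.eqb (u (S K)) 1); nra.
Qed.

Lemma step_ineq m : 1 <= m -> 1/2 + / (2 * (m + 1)) <= (1/2 + / (2 * m)) * (1 - / (8 * m * m)).
Proof.
  intros Hm.
  replace (1/2 + / (2 * (m + 1))) with ((m+2) / (2 * (m+1))) by (field; lra).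
  replace ((1/2 + / (2 * m)) * (1 - / (8 * m * m))) with (((m+1)*(8*m*m-1)) / (16*m*m*m)) by (field; lra).
  apply div_le; [nra|nra|]. nra.
Qed.

Lemma A_low x K : -1 < x -> 1/2 + / (2 * (INR K + 1)) <= A x K.
Proof.
  intros Hx. induction K.
  - simpl. lra.
  - simpl A. destruct (c_bounds x (S K) Hx ltac:(lia)) as [? [? H3]].
    rewrite S_INR in *. pose proof (pos_INR K).
    pose proof (step_ineq (INR K + 1) ltac:(lra)).
    assert (0 <= 1 - / (8 * (INR K + 1) * (INR K + 1))).
    { assert (/ (8 * (INR K + 1) * (INR K + 1)) <= 1).
      { replace 1 with (/1) by field. apply Rinv_le_contravar; nra. }
      lra. }
    assert (0 <= 1/2 + / (2 * (INR K + 1))).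
    { assert (0 < / (2 * (INR K + 1))) by (apply Rinv_0_lt_compat; lra). lra. }
    eapply Rle_trans; [exact H2|]. apply Rmult_le_compat; auto.
Qed.

Lemma A_half x K : -1 < x -> 1/2 <= A x K.
Proof.
  intros Hx. pose proof (A_low x K Hx). pose proof (pos_INR K).
  assert (0 < / (2 * (INR K + 1))) by (apply Rinv_0_lt_compat; lra). lra.
Qed.

Lemma AB_rel x K : -1 < x -> partial_prod x (2 * K + 1) * A x K = partial_prod x 1 * (B x K * B x K).
Proof.
  intros Hx. induction K.
  - simpl. ring.
  - replace (2 * S K + 1)%nat with (S (S (2 * K + 1))) by lia.
    change (partial_prod x (S (S (2 * K + 1)))) with
      (partial_prod x (2 * K + 1) * factor x (S (2 * K + 1)) * factor x (S (S (2 * K + 1)))).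
    replace (S (2 * K + 1)) with (2 * S K)%nat by lia.
    replace (S (2 * S K)) with (2 * S K + 1)%nat by lia.
    simpl A. simpl B.
    destruct (c_bounds x (S K) Hx ltac:(lia)) as [Hc _].
    destruct (pair_prod x (S K) Hx ltac:(lia)) as [[U P]|[U P]]; rewrite U; simpl Z.eqb.
    + transitivity (partial_prod x (2 * K + 1) * A x K * (factor x (2 * S K) * factor x (2 * S K + 1)) * c x (S K)).
      ring. rewrite IHK, P. ring.
    + transitivity (partial_prod x (2 * K + 1) * A x K * (factor x (2 * S K) * factor x (2 * S K + 1)) * c x (S K)).
      ring. rewrite IHK, P. field. lra.
Qed.

Lemma factor_near1 x n : -1 < x -> (1 <= n)%nat ->
  1 - / INR n <= factor x n <= 1 + / INR n.
Proof.
  intros Hx Hn. pose proof (INR_ge1 n Hn).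
  set (r := INR n) in *. set (p := 2 * r + x).
  assert (Hp : r < p) by (unfold p; lra).
  assert (0 < / (p + 1)) by (apply Rinv_0_lt_compat; lra).
  assert (0 < / p) by (apply Rinv_0_lt_compat; lra).
  assert (/ (p + 1) <= / r) by (apply Rinv_le_contravar; lra).
  assert (/ p <= / r) by (apply Rinv_le_contravar; lra).
  destruct (factor_cases x n) as [[-> _]|[-> _]]; unfold t; fold r; fold p;
  replace (2 * r + 1 + x) with (p + 1) by (unfold p; ring).
  - replace (p / (p + 1)) with (1 - / (p + 1)) by (field; lra). lra.
  - replace (/ (p / (p + 1))) with (1 + / p) by (field; lra). lra.
Qed.

Lemma inv_INR_lim : is_lim_seq (fun n => / INR n) 0.
Proof.
  pose proof (is_lim_seq_inv INR p_infty is_lim_seq_INR ltac:(discriminate)). exact H.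
Qed.

Lemma factor_lim x : -1 < x -> is_lim_seq (factor x) 1.
Proof.
  intros Hx. apply is_lim_seq_le_le_loc with (u := fun n => 1 - / INR n) (w := fun n => 1 + / INR n).
  - exists 1%nat. intros n Hn. apply factor_near1; auto.
  - replace (Finite 1) with (Finite (1 - 0)) by (f_equal; ring).
    apply is_lim_seq_minus'. apply is_lim_seq_const. apply inv_INR_lim.
  - replace (Finite 1) with (Finite (1 + 0)) by (f_equal; ring).
    apply is_lim_seq_plus'. apply is_lim_seq_const. apply inv_INR_lim.
Qed.

Lemma interleave (v : nat -> R) (l : R) :
  is_lim_seq (fun K => v (2 * K + 1)%nat) l -> is_lim_seq (fun K => v (2 * K + 2)%nat) l ->
  is_lim_seq v l.
Proof.
  intros H1 H2. apply is_lim_seq_spec. apply is_lim_seq_spec in H1. apply is_lim_seq_spec in H2.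
  intros eps. destruct (H1 eps) as [N1 HN1]. destruct (H2 eps) as [N2 HN2].
  exists (2 * (N1 + N2) + 2)%nat. intros n Hn.
  destruct (Nat.Even_or_Odd n) as [[k Hk]|[k Hk]]; subst n.
  - destruct k as [|j]; [lia|]. replace (2 * S j)%nat with (2 * j + 2)%nat by lia. apply HN2. lia.
  - apply HN1. lia.
Qed.

Lemma conv x : -1 < x -> exists L, 0 < L /\ is_lim_seq (partial_prod x) L.
Proof.
  intros Hx.
  destruct (ex_finite_lim_seq_decr (A x) (1/2) (fun K => A_decr x K Hx) (fun K => A_half x K Hx)) as [LA HA].
  destruct (ex_finite_lim_seq_decr (B x) (1/2) (fun K => B_decr x K Hx)
     (fun K => Rle_trans _ _ _ (A_half x K Hx) (B_ge_A x K Hx))) as [LB HB].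
  assert (LA1 : 1/2 <= LA).
  { pose proof (is_lim_seq_le (fun _ => 1/2) (A x) (1/2) LA (fun K => A_half x K Hx) (is_lim_seq_const _) HA). exact H. }
  assert (LB1 : 1/2 <= LB).
  { pose proof (is_lim_seq_le (fun _ => 1/2) (B x) (1/2) LB (fun K => Rle_trans _ _ _ (A_half x K Hx) (B_ge_A x K Hx)) (is_lim_seq_const _) HB). exact H. }
  set (L := partial_prod x 1 * (LB * LB) * / LA).
  pose proof (pp_pos x 1 Hx) as HP1.
  assert (HL : 0 < L).
  { unfold L. apply Rmult_lt_0_compat. apply Rmult_lt_0_compat. lra. nra. apply Rinv_0_lt_compat; lra. }
  assert (Hodd : is_lim_seq (fun K => partial_prod x (2 * K + 1)) L).
  { apply is_lim_seq_ext with (u := fun K => partial_prod x 1 * (B x K * B x K) * / A x K).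
    - intros K. pose proof (A_pos x K Hx). rewrite <- AB_rel by auto. field. lra.
    - unfold L. apply is_lim_seq_mult'. apply is_lim_seq_mult'. apply is_lim_seq_const.
      apply is_lim_seq_mult'; auto.
      pose proof (is_lim_seq_inv (A x) LA HA) as Hi. simpl in Hi. apply Hi.
      intro E. injection E. lra. }
  exists L. split; auto.
  apply interleave; auto.
  apply is_lim_seq_ext with (u := fun K => partial_prod x (2 * K + 1) * factor x (2 * K + 2)).
  - intros K. replace (2 * K + 2)%nat with (S (2 * K + 1)) by lia. reflexivity.
  - replace L with (L * 1) by ring. apply is_lim_seq_mult'; auto.
    apply (is_lim_seq_subseq (factor x) 1 (fun K => (2 * K + 2)%nat)); [|apply factor_lim; auto].
    intros P [N HN]. exists N. intros n Hn. apply HN. lia.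
Qed.

Lemma h_lim x : -1 < x -> 0 < h x /\ is_lim_seq (partial_prod x) (h x).
Proof.
  intros Hx. destruct (conv x Hx) as [L [HL HlL]].
  assert (h x = L). { unfold h. rewrite (is_lim_seq_unique _ _ HlL). reflexivity. }
  rewrite H. auto.
Qed.

Lemma lim_bounds x y : -1 < x -> x < y ->
  h y <= b x y 2 * h x /\ h x <= b x y 2 * h y.
Proof.
  intros Hx Hxy. destruct (h_lim x Hx) as [_ Lx]. destruct (h_lim y ltac:(lra)) as [_ Ly].
  split.
  - pose proof (is_lim_seq_le _ _ _ _ (fun N => proj1 (pp_bound x y N Hx Hxy)) Ly
      (is_lim_seq_scal_l _ (b x y 2) _ Lx)) as H. exact H.
  - pose proof (is_lim_seq_le _ _ _ _ (fun N => proj2 (pp_bound x y N Hx Hxy)) Lx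
      (is_lim_seq_scal_l _ (b x y 2) _ Ly)) as H. exact H.
Qed.

Lemma b2_lt x y : -1 < x -> x < y -> b x y 2 * (x + 1) < y + 1.
Proof.
  intros. unfold b.
  replace ((2 + y) / (2 + x) * (x + 1)) with (((2 + y) * (x + 1)) * / (2 + x)) by (field; lra).
  replace (y + 1) with (((y + 1) * (2 + x)) * / (2 + x)) by (field; lra).
  apply Rmult_lt_compat_r. apply Rinv_0_lt_compat; lra. nra.
Qed.

Theorem theorem1 :
  (forall x y : R, -1 < x -> x < y -> h y / (y + 1) < h x / (x + 1)) /\
  (forall x y : R, -1 < x -> x < y -> h x * (x + 1) < h y * (y + 1)).
Proof.
  split; intros x y Hx Hxy;
  destruct (h_lim x Hx) as [Px _]; destruct (h_lim y ltac:(lra)) as [Py _];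
  destruct (lim_bounds x y Hx Hxy) as [B1 B2]; pose proof (b2_lt x y Hx Hxy) as Hb.
  - assert (h y * (x + 1) < h x * (y + 1)) by nra.
    replace (h y / (y + 1)) with ((h y * (x + 1)) * / ((x + 1) * (y + 1))) by (field; lra).
    replace (h x / (x + 1)) with ((h x * (y + 1)) * / ((x + 1) * (y + 1))) by (field; lra).
    apply Rmult_lt_compat_r; [apply Rinv_0_lt_compat; nra | assumption].
  - nra.
Qed.
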